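(* Let $\mathit{VI}$ be a finite set of variables with $\#\mathit{VI}=n$. For all $j,k\in\mathbb{N}$ with $1\le j<k\le n$, we have $\mathit{TSD}_j\subsetneq \mathit{TSD}_k$ (strict inclusion).
   Context: $\mathit{SG}=\wp(\mathit{VI})\setminus\{\emptyset\}$ (the set of sharing groups) and $\mathit{SH}=\wp(\mathit{SG})$, ordered by set inclusion. For $1\le k\le n$, the map $\rho_{\mathit{TSD}_k}:\mathit{SH}\to\mathit{SH}$ is $\rho_{\mathit{TSD}_k}(sh)=\{\,S\in\mathit{SG}\mid \forall T\subseteq S:\ \#T<k\implies S=\bigcup\{U\in sh\mid T\subseteq U\subseteq S\}\,\}$; it is an upper closure operator on $\mathit{SH}$, and $\mathit{TSD}_k=\rho_{\mathit{TSD}_k}(\mathit{SH})$ is its image (set of fixpoints). *)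

(* Defs.v *)
From mathcomp Require Import all_boot all_order.
Set Implicit Arguments. Unset Strict Implicit. Unset Printing Implicit Defensive.

Section TSD.
Variable VI : finType.

Definition SG : {set {set VI}} := [set S : {set VI} | S != set0].

Definition SH : {set {set {set VI}}} := powerset SG.

Definition rho_TSD (k : nat) (sh : {set {set VI}}) : {set {set VI}} :=
  [set S in SG | [forall T : {set VI}, (T \subset S) && (#|T| < k) ==>
      (S == \bigcup_(U in sh | (T \subset U) && (U \subset S)) U)]].

Definition TSD (k : nat) : {set {set {set VI}}} :=
  [set rho_TSD k sh | sh in SH].

End TSD.

(* Main.v *)
Require Import Defs.
From mathcomp Require Import all_boot all_order.
From mathcomp Require Import zify.

Set Implicit Arguments.
Section Aux.
Variable VI : finType.
Local Notation rho := (rho_TSD (VI:=VI)).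

Lemma cov_sub (sh : {set {set VI}}) (T S : {set VI}) :
  \bigcup_(U in sh | (T \subset U) && (U \subset S)) U \subset S.
Proof. by apply/bigcupsP => U /andP[_ /andP[_ ->]]. Qed.

Lemma rho_SG k (sh : {set {set VI}}) : rho k sh \subset SG VI.
Proof. by apply/subsetP => S; rewrite inE => /andP[]. Qed.

Lemma rho_ext k (sh : {set {set VI}}) : sh \subset SG VI -> sh \subset rho k sh.
Proof.
move=> hsh; apply/subsetP => S hS; rewrite inE (subsetP hsh _ hS) /=.
apply/forallP => T; apply/implyP => /andP[hT _].
rewrite eqEsubset cov_sub andbT.
by apply: (bigcup_sup S); rewrite hS hT subxx.
Qed.

Lemma rho_idem j (sh : {set {set VI}}) : rho j (rho j sh) = rho j sh.
Proof.
apply/eqP; rewrite eqEsubset rho_ext ?rho_SG // andbT.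
apply/subsetP => S; rewrite !inE => /andP[-> /forallP H] /=.
apply/forallP => T; apply/implyP => hT; have := implyP (H T) hT.
move=> /eqP E; rewrite eqEsubset cov_sub andbT.
apply/subsetP => x; rewrite {1}E => /bigcupP[U /andP[hU /andP[hTU hUS]] hxU].
move: hU; rewrite inE => /andP[_ /forallP HU].
have hT' : (T \subset U) && (#|T| < j) by rewrite hTU; case/andP: hT.
move: (implyP (HU T) hT') => /eqP EU.
move: hxU; rewrite {1}EU => /bigcupP[V /andP[hV /andP[hTV hVU]] hxV].
apply/bigcupP; exists V => //; rewrite hV hTV /=.
exact: subset_trans hVU hUS.
Qed.

Lemma rho_anti j k (sh : {set {set VI}}) : j <= k -> rho k sh \subset rho j sh.
Proof.
move=> jk; apply/subsetP => S; rewrite !inE => /andP[-> /forallP H] /=.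
apply/forallP => T; apply/implyP => /andP[h1 h2]; apply: (implyP (H T)).
by rewrite h1 (leq_trans h2 jk).
Qed.

Lemma TSD_fix k (X : {set {set VI}}) : X \in TSD VI k -> rho k X = X.
Proof. by case/imsetP => sh _ ->; rewrite rho_idem. Qed.

Lemma fix_TSD k (X : {set {set VI}}) : X \subset SG VI -> rho k X = X -> X \in TSD VI k.
Proof.
move=> hX E; apply/imsetP; exists X; last by rewrite E.
by rewrite /SH inE.
Qed.

Lemma exists_card m : m <= #|VI| -> exists S : {set VI}, #|S| = m.
Proof.
elim: m => [|m IH] h; first by exists set0; rewrite cards0.
have [S hS] := IH (ltnW h).
have : #|~: S| > 0 by rewrite cardsCs setCK hS subn_gt0.
case/card_gt0P => x; rewrite inE => hx.
by exists (x |: S); rewrite cardsU1 hx hS.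
Qed.

End Aux.

Theorem proposition3p10 (VI : finType) (n : nat) (hn : #|VI| = n)
    (j k : nat) (hj : 1 <= j) (hjk : j < k) (hk : k <= n) :
  TSD VI j \proper TSD VI k.
Proof.
apply/properP; split.
  apply/subsetP => X hX; have Ej := TSD_fix hX.
  have hXS : X \subset SG VI by rewrite -Ej rho_SG.
  apply: fix_TSD => //; apply/eqP; rewrite eqEsubset rho_ext // andbT.
  by rewrite -{2}Ej rho_anti // ltnW.
have [S0 hS0] : exists S : {set VI}, #|S| = k by apply: exists_card; rewrite hn.
have S0n : S0 != set0 by rewrite -card_gt0 hS0 (leq_ltn_trans _ hjk).
set X := SG VI :\ S0.
have hXS : X \subset SG VI by apply: subsetDl.
have S0in : S0 \in rho_TSD j X.
  rewrite inE /SG inE S0n /=; apply/forallP => T; apply/implyP => /andP[hT hTj].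
  rewrite eqEsubset cov_sub andbT; apply/subsetP => x hx.
  apply/bigcupP; exists (x |: T); last by rewrite setU11.
  have -> : (x |: T \subset S0) by rewrite subUset sub1set hx hT.
  rewrite !inE subsetUr andbT /=.
  rewrite -andbA; apply/andP; split.
    apply/negP => /eqP E; move: hTj; have := cardsU1 x T; rewrite E hS0.
    case: (x \in T) => /=; lia.
  rewrite andbT.
  by apply/set0Pn; exists x; rewrite setU11.
exists X.
  apply: fix_TSD => //; apply/eqP; rewrite eqEsubset rho_ext // andbT.
  apply/subsetP => S; rewrite inE => /andP[hS /forallP H].
  rewrite /X in_setD1 hS andbT; apply/negP => /eqP ES; subst S.
  have [x hx] : exists x, x \in S0 by apply/set0Pn.
  have hT : (S0 :\ x \subset S0) && (#|S0 :\ x| < k).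
    rewrite subsetDl /=; have := cardsD1 x S0; rewrite hx hS0 /=; lia.
  move: (implyP (H _) hT) => /eqP E.
  move: (hx); rewrite {1}E => /bigcupP[U /andP[hU /andP[hTU hUS]] hxU].
  move: hU; rewrite /X in_setD1 => /andP[/eqP hne _]; apply: hne.
  apply/eqP; rewrite eqEsubset hUS /=.
  by rewrite -(setD1K hx) subUset sub1set hxU.
apply/negP => /TSD_fix E.
by move: S0in; rewrite E /X in_setD1 eqxx.
Qed.
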